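(* Let $S\subseteq 2^E$ be a powerful set with $|E|=n$ and $r_S(E)=n-1$. Then $S$ has a deletable element $e\in E$.
   Context: A set $S\subseteq 2^E$ ($E$ finite) is powerful if for every $X\subseteq E$ the number of members of $S$ contained in $X$ is a power of 2. Its rank function is $r_S(X)=\log_2\big(|S|/|\{Y\in S:Y\subseteq E\setminus X\}|\big)$. Let $f$ be the $\{0,1\}$-valued indicator function of $S$. For $e\in E$ let $g(X)=f(X)+f(X\cup\{e\})$ for $X\subseteq E\setminus\{e\}$; the element $e$ is deletable if $\frac{1}{g(\emptyset)}g$ is $\{0,1\}$-valued, i.e. the deletion of $e$ (the multiset over $E\setminus\{e\}$ with indicator $g$) is, up to scaling, a powerful set, namely $\{X\subseteq E\setminus\{e\}: X\in S\text{ or }X\cup\{e\}\in S\}$. *)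

(* Defs.v *)
(* Ground set E is a finType T; subsets of E are {set T}. *)
From mathcomp Require Import all_boot.
Set Implicit Arguments. Unset Strict Implicit. Unset Printing Implicit Defensive.

Section Powerful.
Variable T : finType.

Definition nbelow (S : {set {set T}}) (X : {set T}) : nat :=
  #|[set Y in S | Y \subset X]|.

Definition powerful (S : {set {set T}}) : Prop :=
  forall X : {set T}, exists k : nat, nbelow S X = 2 ^ k.

(* For powerful S both
   counts are powers of 2 (the denominator dividing the numerator), so the
   quotient is an exact power of 2 and trunc_log 2 is the exact log2. *)
Definition rank (S : {set {set T}}) (X : {set T}) : nat :=
  trunc_log 2 (#|S| %/ nbelow S (~: X)).

Definition del_count (S : {set {set T}}) (e : T) (X : {set T}) : nat :=
  (X \in S) + ((X :|: [set e]) \in S).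

(* e is deletable: g / g(emptyset) is {0,1}-valued (with g(emptyset) <> 0
   so that the scaling is defined) *)
Definition deletable (S : {set {set T}}) (e : T) : Prop :=
  del_count S e set0 <> 0 /\
  forall X : {set T}, X \subset ~: [set e] ->
    del_count S e X = 0 \/ del_count S e X = del_count S e set0.

End Powerful.

(* Main.v *)
Require Import Defs.
From mathcomp Require Import all_boot zify.
Set Implicit Arguments. Unset Strict Implicit. Unset Printing Implicit Defensive.

Section Aux.
Variable T : finType.
Implicit Types (S : {set {set T}}) (X Y Z W : {set T}).

Lemma card_sepE S (P : pred {set T}) :
  #|[set Y in S | P Y]| = \sum_(Y in S) P Y.
Proof.
rewrite -sum1_card (big_setID S) /=.
have -> : \sum_(i in [set Y in S | P Y] :&: S) 1 = \sum_(i in S) P i.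
  rewrite big_mkcond [RHS]big_mkcond; apply: eq_bigr => Y _.
  by rewrite !inE; case: (Y \in S); case: (P Y).
rewrite [X in _ + X]big1 ?addn0 // => Y; rewrite !inE; by case: (Y \in S); case: (P Y).
Qed.

Lemma nbelow_sumS S X : nbelow S X = \sum_(Y in S) (Y \subset X).
Proof. exact: card_sepE. Qed.

Lemma nbelow_pow S X : nbelow S X = \sum_(Y in powerset X) (Y \in S).
Proof.
rewrite /nbelow -sum1_card big_mkcond [RHS]big_mkcond /=.
apply: eq_bigr => Y _; rewrite !inE.
by case: (Y \in S); case: (Y \subset X).
Qed.

Lemma sum_powU1 (F : {set T} -> nat) e Z : e \notin Z ->
  \sum_(Y in powerset (e |: Z)) F Y = \sum_(Y in powerset Z) (F Y + F (e |: Y)).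
Proof.
move=> eZ; rewrite big_split /=.
rewrite (bigID (fun Y => e \in Y)) /= addnC; congr (_ + _).
  apply: eq_bigl => Y; rewrite !powersetE.
  apply/idP/idP.
    case/andP=> sY nY; apply/subsetP => y yY.
    move/subsetP: sY => /(_ y yY); rewrite !inE; case/orP=> // /eqP ye.
    by rewrite -ye yY in nY.
  move=> sYZ; rewrite (subset_trans sYZ) ?subsetUr //=.
  by apply/negP => eY; move/subsetP: sYZ => /(_ e eY); rewrite (negbTE eZ).
rewrite (reindex_onto (fun Y => e |: Y) (fun Y => Y :\ e)) /=; last first.
  by move=> Y /andP[_ eY]; rewrite setD1K.
apply: eq_bigl => Y; rewrite !powersetE setU11 andbT.
apply/idP/idP.
  case/andP=> sY /eqP eq; rewrite -eq; apply/subsetP => y; rewrite in_setD1.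
  case/andP=> ye yY; move/subsetP: sY => /(_ y yY); rewrite !inE.
  by rewrite (negbTE ye).
move=> sYZ; have nY : e \notin Y.
  by apply/negP => eY; move/subsetP: sYZ => /(_ e eY); rewrite (negbTE eZ).
by rewrite setU1K // eqxx andbT; apply: setUS.
Qed.

Lemma pow2_lt p n : (exists a, p = 2 ^ a) -> p < 2 ^ n -> 2 * p <= 2 ^ n.
Proof.
case=> a ->; rewrite ltn_exp2l // => an.
by rewrite -expnS leq_exp2l.
Qed.

Lemma pow2_odd a : odd (2 ^ a) -> a = 0.
Proof. by rewrite oddX orbF; move/eqP. Qed.

End Aux.

Lemma pow2_cases a : 2 ^ a = 1 \/ exists b, 2 ^ a = 2 * 2 ^ b.
Proof. by case: a => [|b]; [left | right; exists b; rewrite expnS]. Qed.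

Section Main.
Variable T : finType.
Variable S : {set {set T}}.
Hypothesis Hpow : powerful S.
Hypothesis H0 : set0 \in S.
Implicit Types (X Y Z W : {set T}).

Local Notation c := (nbelow S).

Lemma c_gt0 X : 0 < c X.
Proof. by rewrite /nbelow card_gt0; apply/set0Pn; exists set0; rewrite inE H0 sub0set. Qed.

Lemma top_split (F : {set T} -> nat) Z :
  \sum_(Y in powerset Z) F Y = F Z + \sum_(Y in powerset Z | Y != Z) F Y.
Proof. by rewrite (bigD1 Z) ?powersetE ?subxx. Qed.

Lemma proper_of Z Y : Y \in powerset Z -> Y != Z -> #|Y| < #|Z|.
Proof. by rewrite powersetE => sYZ nYZ; apply: proper_card; rewrite properEneq nYZ. Qed.

Lemma caseA x : [set x] \in S -> forall Z, x \notin Z -> (Z \in S) = (x |: Z \in S).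
Proof.
move=> Hx Z0.
have: forall k Z, #|Z| < k -> x \notin Z -> (Z \in S) = (x |: Z \in S); last by apply.
elim=> [//|k IH] Z ltZ xZ.
have E := sum_powU1 (fun Y => (Y \in S) : nat) xZ; rewrite -nbelow_pow top_split in E.
have E2 : \sum_(Y in powerset Z | Y != Z) ((Y \in S) + (x |: Y \in S))
        = \sum_(Y in powerset Z | Y != Z) ((Y \in S) + (Y \in S)).
  apply: eq_bigr => Y /andP[PY nYZ]; rewrite -IH //.
    by have := proper_of PY nYZ; lia.
  by apply/negP => xY; move: PY; rewrite powersetE => /subsetP /(_ x xY); rewrite (negbTE xZ).
rewrite E2 big_split /= in E.
have [->|nZ] := eqVneq Z set0; first by rewrite H0 setU0 Hx.
have r1 : 0 < \sum_(Y in powerset Z | Y != Z) (Y \in S).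
  rewrite (bigD1 set0) /=; first by rewrite H0.
  by rewrite powersetE sub0set eq_sym.
have [a Ea] := Hpow (x |: Z).
move: E r1; rewrite Ea.
set r := \sum_(_ in _ | _) _.
case: (Z \in S); case: (x |: Z \in S) => //= E r1;
  case: (pow2_cases a) => [E3|[b E3]]; lia.
Qed.

Lemma deletable_A x : [set x] \in S -> deletable S x.
Proof.
move=> Hx; rewrite /deletable /del_count set0U H0 Hx; split => // X.
rewrite subsetC => /subsetP /(_ x); rewrite !inE eqxx => /(_ isT) xX.
rewrite setUC (caseA Hx xX); case: (x |: X \in S); by [right | left].
Qed.

End Main.

Section Case2.
Variable T : finType.
Variable S : {set {set T}}.
Hypothesis Hpow : powerful S.
Hypothesis H0 : set0 \in S.
Hypothesis Hns : forall y : T, [set y] \notin S.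
Implicit Types (X Y Z W : {set T}).

Local Notation c := (nbelow S).

Definition univ W v := v \in W /\ forall y, y \in W -> y != v -> [set v; y] \in S.

Definition cnt2 x y W := #|[set Y in S | (Y \subset W) && (x \in Y) && (y \in Y)]|.

Lemma adjC (a b : T) : [set a; b] = [set b; a].
Proof. by rewrite setUC. Qed.

Lemma bound X : X != set0 -> 2 * c X <= 2 ^ #|X|.
Proof.
case/set0Pn => y yX; apply: pow2_lt; first exact: Hpow.
have sub : [set Y in S | Y \subset X] \subset powerset X :\ [set y].
  apply/subsetP => Y; rewrite in_setD1 powersetE inE => /andP[YS ->]; rewrite andbT.
  by apply/negP => /eqP eY; move: YS; rewrite eY (negbTE (Hns y)).
have := subset_leq_card sub; rewrite -card_powerset (cardsD1 [set y]) powersetE sub1set yX.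
by rewrite /nbelow add1n ltnS.
Qed.

Lemma IE W x y : c W + c (W :\ x :\ y) = c (W :\ x) + c (W :\ y) + cnt2 x y W.
Proof.
rewrite /cnt2 !nbelow_sumS card_sepE -!big_split /=; apply: eq_bigr => Y _.
rewrite !subsetD1; case: (Y \subset W); case: (x \in Y); by case: (y \in Y).
Qed.

Lemma C2 W x y : x \in W -> y \in W -> x != y -> 4 * cnt2 x y W <= 2 ^ #|W|.
Proof.
move=> xW yW nxy.
have sub : [set Y in S | (Y \subset W) && (x \in Y) && (y \in Y)] \subset
           [set x |: (y |: Z) | Z in powerset (W :\ x :\ y)].
  apply/subsetP => Y; rewrite !inE => /andP[_ /andP[/andP[sYW xY] yY]].
  apply/imsetP; exists (Y :\ x :\ y).
    by rewrite powersetE; apply: setSD; apply: setSD.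
  by rewrite setD1K ?setD1K // in_setD1 eq_sym nxy.
have := leq_trans (subset_leq_card sub) (leq_imset_card _ _).
rewrite card_powerset (cardsD1 x W) xW (cardsD1 y (W :\ x)) in_setD1 eq_sym nxy yW /=.
rewrite /cnt2 => h; by rewrite !expnS mulnA leq_mul2l h orbT.
Qed.

Lemma pair_eq W v w : #|W| = 2 -> v \in W -> w \in W -> v != w -> W = [set v; w].
Proof.
move=> cW vW wW nvw; apply/esym/eqP; rewrite eqEcard cards2 nvw cW leqnn andbT.
by rewrite subUset !sub1set vW wW.
Qed.

Lemma c_le1 X : #|X| = 1 -> c X <= 1.
Proof.
move=> cX; have ne : X != set0 by rewrite -card_gt0 cX.
have := bound ne; rewrite cX expn1; lia.
Qed.

Lemma pair_tight (P : {set T}) v w : #|P| = 2 -> v \in P -> w \in P -> v != w -> 2 <= c P ->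
  [set v; w] \in S.
Proof.
move=> cP vP wP nvw c2.
have EP := pair_eq cP vP wP nvw.
have h1 : c (P :\ v) <= 1.
  by apply: c_le1; move: cP; rewrite (cardsD1 v P) vP; lia.
have h2 : c (P :\ w) <= 1.
  by apply: c_le1; move: cP; rewrite (cardsD1 w P) wP; lia.
have h3 := c_gt0 H0 (P :\ v :\ w).
have E := IE P v w.
have : 0 < cnt2 v w P by lia.
case/card_gt0P => Y; rewrite !inE => /andP[YS /andP[/andP[sYP vY] wY]].
suff -> : [set v; w] = Y by [].
apply/eqP; rewrite eqEsubset -EP sYP andbT.
by rewrite EP subUset !sub1set vY wY.
Qed.

Lemma notin_sub W e Z : Z \subset W :\ e -> e \notin Z.
Proof.
by move=> /subsetP sZ; apply/negP => /sZ; rewrite in_setD1 eqxx.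
Qed.

Lemma G W e : univ W e -> forall Z, Z \subset W :\ e -> (Z \in S) + (e |: Z \in S) = 1.
Proof.
move=> [eW Hu] Z0.
have: forall k Z, #|Z| < k -> Z \subset W :\ e -> (Z \in S) + (e |: Z \in S) = 1;
  last by apply.
elim=> [//|k IH] Z ltZ sZ.
have eZ := notin_sub sZ.
have E := sum_powU1 (fun Y => (Y \in S) : nat) eZ; rewrite -nbelow_pow top_split in E.
have E2 : \sum_(Y in powerset Z | Y != Z) ((Y \in S) + (e |: Y \in S))
        = \sum_(Y in powerset Z | Y != Z) 1.
  apply: eq_bigr => Y /andP[PY nYZ]; rewrite IH //.
    by have := proper_of PY nYZ; lia.
  by apply: subset_trans sZ; rewrite -powersetE.
have E3 := top_split (fun _ => 1) Z; rewrite sum1_card card_powerset /= in E3.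
rewrite E2 in E.
have [->|nZ] := eqVneq Z set0; first by rewrite H0 setU0 (negbTE (Hns e)).
case: (boolP (#|Z| == 1)) => [/cards1P [y Zy]|n1].
  rewrite Zy (negbTE (Hns y)) /=.
  move: sZ; rewrite Zy sub1set in_setD1 => /andP[ye yW].
  by rewrite (Hu y yW ye).
have c2 : 2 <= #|Z| by move: nZ n1; rewrite -card_gt0; lia.
have h4 : 2 ^ 2 <= 2 ^ #|Z| by rewrite leq_exp2l.
have [a Ea] := Hpow (e |: Z).
move: E E3; rewrite Ea.
set r := \sum_(_ in _ | _) _.
case: (Z \in S); case: (e |: Z \in S) => //= E E3;
  case: (pow2_cases a) => [E4|[b E4]];
  case: (pow2_cases #|Z|) => [E5|[d E5]]; rewrite ?E5 in h4; lia.
Qed.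

Lemma G_tight W e : univ W e -> 2 * c W = 2 ^ #|W|.
Proof.
move=> Hu; have eW := Hu.1.
have E := sum_powU1 (fun Y => (Y \in S) : nat) (notin_sub (subxx (W :\ e))).
rewrite -nbelow_pow setD1K // in E.
rewrite E (eq_bigr (fun _ => 1)); last first.
  by move=> Y; rewrite powersetE => sY; apply: (G Hu).
by rewrite sum1_card card_powerset (cardsD1 e W) eW add1n expnS.
Qed.

Lemma arithL a b p q r : a + b = p + q + r ->
  2 * q = 2 ^ 3 -> 2 * p = 2 ^ 3 -> 2 * a <= 2 ^ 4 -> 1 < r -> 1 < b.
Proof. rewrite !expnS expn0; lia. Qed.

Lemma L_local x u v w :
  (x == u) = false -> (x == v) = false -> (x == w) = false ->
  (u == v) = false -> (u == w) = false -> (v == w) = false ->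
  [set x; u] \notin S -> [set x; v] \in S -> [set x; w] \in S ->
  [set u; v] \in S -> [set u; w] \in S -> [set v; w] \in S.
Proof.
move=> xu xv xw uv uw vw nxu axv axw auv auw.
have ux : (u == x) = false by rewrite eq_sym.
have vx : (v == x) = false by rewrite eq_sym.
have wx : (w == x) = false by rewrite eq_sym.
have vu : (v == u) = false by rewrite eq_sym.
have wu : (w == u) = false by rewrite eq_sym.
have wv : (w == v) = false by rewrite eq_sym.
have neqs := (xu, xv, xw, uv, uw, vw, ux, vx, wx, vu, wu, wv).
have [Q EQ] : {Q | Q = x |: (u |: [set v; w])} by exists (x |: (u |: [set v; w])).
have cQ : #|Q| = 4 by rewrite EQ !cardsU1 cards1 !inE ?neqs.
have Qu : univ (Q :\ u) x.
  split; first by rewrite ?EQ !inE ?neqs eqxx.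
  move=> y; rewrite ?EQ !inE => /andP[yu]; case/or4P => /eqP ye; subst y => //;
  by rewrite ?eqxx in yu *.
have Qx : univ (Q :\ x) u.
  split; first by rewrite ?EQ !inE ?neqs eqxx.
  move=> y; rewrite ?EQ !inE => /andP[yx]; case/or4P => /eqP ye; subst y => //;
  by rewrite ?eqxx in yx *.
pose proof (@G_tight (Q :\ u) x Qu) as tu.
pose proof (@G_tight (Q :\ x) u Qx) as tx.
have cQu : #|Q :\ u| = 3.
  have uQ : u \in Q by rewrite ?EQ !inE eqxx orbT.
  by move: cQ; rewrite (cardsD1 u Q) uQ add1n => -[].
have cQx : #|Q :\ x| = 3.
  have xQ : x \in Q by rewrite ?EQ !inE eqxx.
  by move: cQ; rewrite (cardsD1 x Q) xQ add1n => -[].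
rewrite cQu in tu; rewrite cQx in tx.
have bQ : 2 * c Q <= 2 ^ 4.
  by rewrite -cQ; apply: bound; apply/set0Pn; exists x; rewrite ?EQ !inE eqxx.
have E := IE Q x u.
have memA : forall a, a != x -> a != u -> [set x; u] \subset Q :\ a ->
    a \in Q -> univ (a |: [set x; u]) a -> a |: [set x; u] \in S.
  move=> a ax au sQ aQ Ha.
  have h := @G (a |: [set x; u]) a Ha [set x; u].
  have sub' : [set x; u] \subset (a |: [set x; u]) :\ a.
    apply/subsetP => z; rewrite !inE => /orP[] /eqP ->; rewrite eqxx ?orbT andbT.
      by rewrite eq_sym.
    by rewrite eq_sym.
  by move: (h sub'); rewrite (negbTE nxu); case: (a |: [set x; u] \in S).
have A1 : v |: [set x; u] \in S.
  apply: memA.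
  - by rewrite vx.
  - by rewrite vu.
  - by rewrite EQ subUset !sub1set !inE !eqxx ?neqs ?orbT.
  - by rewrite EQ !inE !eqxx ?orbT.
  split; first by rewrite !inE eqxx.
  move=> y; rewrite !inE; case/or3P => /eqP ->; rewrite ?eqxx //.
    by rewrite adjC.
  by rewrite adjC.
have A2 : w |: [set x; u] \in S.
  apply: memA.
  - by rewrite wx.
  - by rewrite wu.
  - by rewrite EQ subUset !sub1set !inE !eqxx ?neqs ?orbT.
  - by rewrite EQ !inE !eqxx ?orbT.
  split; first by rewrite !inE eqxx.
  move=> y; rewrite !inE; case/or3P => /eqP ->; rewrite ?eqxx //.
    by rewrite adjC.
  by rewrite adjC.
have cnt : 2 <= cnt2 x u Q.
  have sub : [set v |: [set x; u]; w |: [set x; u]] \subset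
             [set Y in S | (Y \subset Q) && (x \in Y) && (u \in Y)].
    rewrite subUset !sub1set !inE A1 A2 !eqxx ?orbT /= EQ.
    by rewrite !subUset !sub1set !inE !eqxx ?orbT.
  have neq : v |: [set x; u] != w |: [set x; u].
    apply/negP => /eqP e; have : v \in w |: [set x; u] by rewrite -e !inE eqxx.
    by rewrite !inE vw vx vu.
  by have := subset_leq_card sub; rewrite cards2 neq.
have cP := c_gt0 H0 (Q :\ x :\ u).
apply: (pair_tight (P := Q :\ x :\ u)).
- have xQ : x \in Q by rewrite EQ !inE eqxx.
  have uQx : u \in Q :\ x by rewrite EQ !inE eqxx ux orbT.
  by move: cQ; rewrite (cardsD1 x Q) xQ (cardsD1 u (Q :\ x)) uQx /= => /succn_inj/succn_inj.
- by rewrite ?EQ !inE ?neqs ?eqxx ?orbT.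
- by rewrite ?EQ !inE ?neqs ?eqxx ?orbT.
- by rewrite vw.
- move: E tu tx bQ cnt.
  move: (c Q) (c (Q :\ x :\ u)) (c (Q :\ x)) (c (Q :\ u)) (cnt2 x u Q).
  exact: arithL.
Qed.


Lemma arithM A B P Q R N : A + B = P + Q + R -> 2 * A = N -> 8 * P <= N ->
  8 * Q <= N -> 4 * R <= N -> 0 < B -> False.
Proof. lia. Qed.

Lemma arith4 p n : 2 * p <= 2 ^ n -> 4 * p <= 2 ^ n.+1.
Proof. rewrite expnS; lia. Qed.

Lemma cot_helper X n : 2 * c X <= 2 ^ n -> 4 * c X != 2 ^ n.+1 -> 8 * c X <= 2 ^ n.+1.
Proof.
move=> h1 h2; have [a Ea] := Hpow X.
have h3 : 4 * c X < 2 ^ n.+1 by rewrite ltn_neqAle h2 arith4.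
have := @pow2_lt (4 * c X) n.+1; rewrite mulnA; apply => //.
by exists a.+2; rewrite Ea !expnS mulnA.
Qed.

Lemma card_D1 W x : x \in W -> #|W| = #|W :\ x|.+1.
Proof. by move=> xW; rewrite (cardsD1 x W) xW. Qed.

Lemma M1 W x y : x \in W -> y \in W -> x != y -> 2 * c W = 2 ^ #|W| ->
  4 * c (W :\ x) = 2 ^ #|W| \/ 4 * c (W :\ y) = 2 ^ #|W|.
Proof.
move=> xW yW nxy tW.
case: (eqVneq (4 * c (W :\ x)) (2 ^ #|W|)) => [h|hx]; first by left.
case: (eqVneq (4 * c (W :\ y)) (2 ^ #|W|)) => [h|hy]; first by right.
exfalso.
have bx : 2 * c (W :\ x) <= 2 ^ #|W :\ x|.
  by apply: bound; apply/set0Pn; exists y; rewrite in_setD1 eq_sym nxy.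
have bY : 2 * c (W :\ y) <= 2 ^ #|W :\ y|.
  by apply: bound; apply/set0Pn; exists x; rewrite in_setD1 nxy.
rewrite (card_D1 xW) in hx; rewrite (card_D1 yW) in hy.
have ex := cot_helper bx hx; have ey := cot_helper bY hy.
rewrite -(card_D1 xW) in ex; rewrite -(card_D1 yW) in ey.
have := C2 xW yW nxy; have := IE W x y; have := c_gt0 H0 (W :\ x :\ y).
move: tW ex ey.
move: (c W) (c (W :\ x :\ y)) (c (W :\ x)) (c (W :\ y)) (cnt2 x y W) (2 ^ #|W|).
move=> A B P Q R N *; exact: (@arithM A B P Q R N).
Qed.


Lemma arith_half n p : 4 * p = 2 ^ n.+1 -> 2 * p = 2 ^ n.
Proof. rewrite expnS; lia. Qed.

Lemma arith_two p : 2 * p = 2 ^ 2 -> 1 < p.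
Proof. rewrite !expnS expn0; lia. Qed.

Lemma main k : forall W, #|W| = k.+1 -> 2 * c W = 2 ^ #|W| -> exists v, univ W v.
Proof.
elim: k => [|k IH] W cW tW.
  move/eqP/cards1P: cW => [v ->]; exists v; split; first by rewrite inE.
  by move=> y; rewrite inE => /eqP ->; rewrite eqxx.
case: k IH cW => [|k] IH cW.
  have : 0 < #|W| by rewrite cW.
  case/card_gt0P => v vW.
  have : 0 < #|W :\ v| by move: cW; rewrite (card_D1 vW) => -[->].
  case/card_gt0P => w; rewrite in_setD1 => /andP[wv wW].
  have nvw : v != w by rewrite eq_sym.
  have Hvw : [set v; w] \in S.
    by apply: (pair_tight cW vW wW nvw); apply: arith_two; rewrite tW cW.
  exists v; split => // y yW yv.
  move: yW; rewrite (pair_eq cW vW wW nvw) !inE (negbTE yv) /= => /eqP ->.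
  exact: Hvw.
pose cot z := 4 * c (W :\ z) = 2 ^ #|W|.
have sub : forall x, x \in W -> cot x -> exists u, univ (W :\ x) u.
  move=> x xW cx; apply: IH.
    by move: cW; rewrite (card_D1 xW) => -[].
  by apply: arith_half; rewrite -(card_D1 xW).
have K : forall x u, x \in W -> cot x -> univ (W :\ x) u -> cot u ->
    exists v, univ W v.
  move=> x u xW cx [uWx Hu] cu.
  have uW : u \in W by move: uWx; rewrite in_setD1 => /andP[].
  have ux : u != x by move: uWx; rewrite in_setD1 => /andP[].
  case: (boolP ([set u; x] \in S)) => aux.
    exists u; split => // y yW yu.
    case: (eqVneq y x) => [->|yx] //.
    by apply: Hu => //; rewrite in_setD1 yx.
  have [w [wWu Hw]] := sub u uW cu.
  have wW : w \in W by move: wWu; rewrite in_setD1 => /andP[].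
  have wu : w != u by move: wWu; rewrite in_setD1 => /andP[].
  case: (eqVneq w x) => [ewx|wx]; last first.
    exists w; split => // y yW yw.
    case: (eqVneq y u) => [->|yu].
      by rewrite adjC; apply: Hu; rewrite ?in_setD1 ?wx.
    by apply: Hw => //; rewrite in_setD1 yu.
  subst w.
  have : 0 < #|W :\ x :\ u|.
    move: cW; rewrite (card_D1 xW) (card_D1 uWx) => -[->] //.
  case/card_gt0P => v; rewrite !in_setD1 => /and3P[vu vx vW].
  exists v; split => // y yW yv.
  have xv : [set x; v] \in S by apply: Hw => //; rewrite in_setD1 vu.
  have uv : [set u; v] \in S by apply: Hu => //; rewrite in_setD1 vx.
  case: (eqVneq y x) => [->|yx]; first by rewrite adjC.
  case: (eqVneq y u) => [->|yu]; first by rewrite adjC.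
  apply: (@L_local x u v y).
  - by apply/negbTE; rewrite eq_sym.
  - by apply/negbTE; rewrite eq_sym.
  - by apply/negbTE; rewrite eq_sym.
  - by apply/negbTE; rewrite eq_sym.
  - by apply/negbTE; rewrite eq_sym.
  - by apply/negbTE; rewrite eq_sym.
  - by rewrite adjC.
  - exact: xv.
  - by apply: Hw => //; rewrite in_setD1 yu.
  - exact: uv.
  - by apply: Hu => //; rewrite in_setD1 yx.
have : 0 < #|W| by rewrite cW.
case/card_gt0P => a aW.
have : 0 < #|W :\ a| by move: cW; rewrite (card_D1 aW) => -[->].
case/card_gt0P => b; rewrite in_setD1 => /andP[ba bW].
have : 0 < #|W :\ a :\ b|.
  by move: cW; rewrite (card_D1 aW) (@card_D1 (W :\ a) b) ?in_setD1 ?ba // => -[->].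
case/card_gt0P => d; rewrite !in_setD1 => /and3P[db da dW].
have ab : a != b by rewrite eq_sym.
have ad : a != d by rewrite eq_sym.
have bd : b != d by rewrite eq_sym.
have [x1 [x2 [nx12 x1W x2W c1 c2]]] : exists x1 x2, [/\ x1 != x2, x1 \in W,
    x2 \in W, cot x1 & cot x2].
  case: (M1 aW bW ab tW) => [ca|cb].
    case: (M1 bW dW bd tW) => [cb|cd].
      by exists a, b.
    by exists a, d.
  case: (M1 aW dW ad tW) => [ca|cd].
    by exists a, b.
  by exists b, d.
have [u1 H1] := sub x1 x1W c1.
have [u2 H2] := sub x2 x2W c2.
case: (boolP (4 * c (W :\ u1) == 2 ^ #|W|)) => [/eqP cu1|ncu1].
  exact: (K x1 u1).
case: (boolP (4 * c (W :\ u2) == 2 ^ #|W|)) => [/eqP cu2|ncu2].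
  exact: (K x2 u2).
have u1W : u1 \in W by move: H1.1; rewrite in_setD1 => /andP[].
have u2W : u2 \in W by move: H2.1; rewrite in_setD1 => /andP[].
have eu : u1 = u2.
  apply/eqP; apply/negPn/negP => nu.
  by case: (M1 u1W u2W nu tW) => /eqP; [rewrite (negbTE ncu1) | rewrite (negbTE ncu2)].
subst u2.
exists u1; split => // y yW yu.
case: (eqVneq y x1) => [eyx|yx].
  subst y; apply: H2.2 => //; rewrite in_setD1 x1W andbT.
  exact: nx12.
by apply: H1.2 => //; rewrite in_setD1 yx.
Qed.

End Case2.

Unset Implicit Arguments.
Theorem theorem6 (T : finType) (S : {set {set T}}) :
  powerful S -> rank S [set: T] + 1 = #|T| ->
  exists e : T, deletable S e.
Proof.
move=> Hp Hr.
have H0 : set0 \in S.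
  have [k Ek] := Hp set0; apply/negPn/negP => n0.
  have : nbelow S set0 = 0.
    rewrite /nbelow; apply/eqP; rewrite cards_eq0; apply/eqP/setP => Y.
    rewrite !inE subset0; case: (eqVneq Y set0) => [->|]; last by rewrite andbF.
    by rewrite (negbTE n0).
  by rewrite Ek; move/eqP; rewrite expn_eq0.
have n1 : nbelow S set0 = 1.
  rewrite /nbelow (_ : [set Y in S | Y \subset set0] = [set set0]) ?cards1 //.
  apply/setP => Y; rewrite !inE subset0; case: (eqVneq Y set0) => [->|]; last by rewrite andbF.
  by rewrite H0.
have cT : nbelow S setT = #|S|.
  by rewrite /nbelow (_ : [set Y in S | Y \subset setT] = S) //; apply/setP => Y; rewrite inE subsetT andbT.
have [k Ek] := Hp setT.
rewrite /rank setCT n1 divn1 -cT Ek trunc_expnK // in Hr.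
case: (boolP [exists y, [set y] \in S]) => [/existsP [x Hx]|Hn].
  by exists x; apply: deletable_A.
move: Hn; rewrite negb_exists => /forallP Hns.
have tT : 2 * nbelow S setT = 2 ^ #|[set: T]|.
  by rewrite cardsT -Hr Ek addn1 expnS.
have cT' : #|[set: T]| = k.+1 by rewrite cardsT -Hr addn1.
have [e He] := main Hp H0 Hns cT' tT.
exists e; split.
  by rewrite /del_count set0U H0 (negbTE (Hns e)).
move=> X sX; right.
have sX' : X \subset [set: T] :\ e by rewrite setTD.
have := G Hp H0 Hns He sX'.
by rewrite /del_count set0U H0 (negbTE (Hns e)) setUC => ->.
Qed.
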